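(* Let $n\ge 3$ and let $\Delta^o(D_{2n})$ be the order super commuting graph of the dihedral group $D_{2n}$. (i) If $n$ is odd, the Sombor spectrum of $\Delta^o(D_{2n})$ consists of $-(n-1)\sqrt2$ with multiplicity $n-2$, $-n\sqrt2$ with multiplicity $n-1$, and the three roots (with multiplicity) of \[x\big(x-(n-1)(n-2)\sqrt2\big)\big(x-n(n-1)\sqrt2\big)-(n-1)(5n^2-6n+2)\big(x-n(n-1)\sqrt2\big)-n(5n^2-4n+1)\big(x-(n-1)(n-2)\sqrt2\big).\] (ii) If $n$ is even, the Sombor spectrum of $\Delta^o(D_{2n})$ consists of $-(2n-1)\sqrt2$ with multiplicity $2n-1$ and $(2n-1)^2\sqrt2$ with multiplicity $1$.
   Context: For a finite simple graph $\Gamma$ with vertices $u_1,\dots,u_N$, the Sombor matrix $S(\Gamma)$ has $(i,j)$ entry $\sqrt{\deg(u_i)^2+\deg(u_j)^2}$ if $u_i,u_j$ are adjacent and $0$ otherwise; the Sombor spectrum is the multiset of its eigenvalues. $D_{2n}=\langle a,b: a^n=b^2=e,\ ba=a^{-1}b\rangle$. The commuting graph $\Delta(G)$ has vertex set $G$, distinct $x,y$ adjacent iff $xy=yx$. The order super commuting graph $\Delta^o(G)$ has vertex set $G$, and distinct $g,h$ are adjacent iff $o(g)=o(h)$ or there exist $g',h'\in G$ with $o(g')=o(g)$, $o(h')=o(h)$ and $g'h'=h'g'$ (with $g'\neq h'$); here $o(x)$ is the order of $x$. *)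

(* Defs.v *)
From HB Require Import structures.
From mathcomp Require Import all_boot all_order all_algebra all_fingroup all_solvable.
From mathcomp Require Import all_reals.
Set Implicit Arguments. Unset Strict Implicit. Unset Printing Implicit Defensive.
Import Order.TTheory GRing.Theory Num.Theory.

Definition osc_adj (gT : finGroupType) : rel gT :=
  fun g h => (g != h) &&
    (((#[g]%g) == (#[h]%g))%N ||
     [exists g' : gT, exists h' : gT,
        [&& (#[g']%g) == (#[g]%g), (#[h']%g) == (#[h]%g), (g' * h' == h' * g')%g & g' != h']]).

Definition vdeg (T : finType) (e : rel T) (x : T) : nat := #|[set y | e x y]|.

Definition sombor_matrix (R : realType) (T : finType) (e : rel T) : 'M[R]_#|T| :=
  (\matrix_(i < #|T|, j < #|T|)
    if e (enum_val i) (enum_val j) then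
      Num.sqrt ((vdeg e (enum_val i))%:R ^+ 2 + (vdeg e (enum_val j))%:R ^+ 2)
    else 0)%R.

(* Main.v *)
Require Import Defs.
From HB Require Import structures.
From mathcomp Require Import all_boot all_order all_algebra all_fingroup all_solvable.
From mathcomp Require Import all_reals.
Import Order.TTheory GRing.Theory Num.Theory.
Local Open Scope ring_scope.
From mathcomp Require Import zify ring lra.

Set Implicit Arguments. Unset Strict Implicit. Unset Printing Implicit Defensive.

Section GroupPart.
Local Open Scope group_scope.

Definition dih {gT : finGroupType} (n : nat) (x y : gT) :=
  [/\ #|gT| = n.*2, #[x] = n, x ^ y = x^-1, y * y = 1 &
      forall g, g \notin <[x]> -> exists2 r, r \in <[x]> & g = r * y].

Lemma dih_conj (gT : finGroupType) n (x y r : gT) : dih n x y -> r \in <[x]> -> r ^ y = r^-1.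
Proof.
case=> _ _ xy _ _ /cycleP [i ->]; by rewrite conjXg xy expgVn.
Qed.

Lemma dih_yV (gT : finGroupType) n (x y : gT) : dih n x y -> y^-1 = y.
Proof. by case=> _ _ _ yy _; apply/eqP; rewrite eq_invg_mul yy. Qed.

Lemma cyc_comm (gT : finGroupType) (x a b : gT) : a \in <[x]> -> b \in <[x]> -> commute a b.
Proof. by move=> /cycleP [i ->] /cycleP [j ->]; apply: commuteX2. Qed.

Lemma dih_ord2 (gT : finGroupType) n (x y g : gT) : dih n x y -> g \notin <[x]> -> #[g] = 2.
Proof.
move=> D gx; have [_ _ _ yy dec] := D; have [r rx eg] := dec g gx.
have gg : g ^+ 2 == 1.
  rewrite expgS expg1 eg -mulgA -{1}(dih_yV D) -conjgE.
  by rewrite (dih_conj D rx) mulgV.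
have g1 : g != 1 by apply: contraNneq gx => ->; rewrite group1.
have : (#[g] %| 2)%N by rewrite order_dvdn.
have : #[g] != 1%N by rewrite order_eq1.
have := order_gt0 g.
move: #[g] => k; case: k => [|[|[|k]]] //.
Qed.

Lemma dih_comm (gT : finGroupType) n (x y r g : gT) : dih n x y -> r \in <[x]> -> g \notin <[x]> ->
  commute r g <-> r * r = 1.
Proof.
move=> D rx gx; have [_ _ _ yy dec] := D; have [s sx eg] := dec g gx.
have rs : commute r s := cyc_comm rx sx.
have E : commute r y <-> r * r = 1.
  split => [cry|e].
    have : r ^ y = r by rewrite conjgE cry mulKg.
    by rewrite (dih_conj D rx) => h; rewrite -{1}h mulVg.
  have : r ^ y = r by rewrite (dih_conj D rx); apply/eqP; rewrite eq_invg_mul e.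
  by rewrite conjgE => h; rewrite /commute -{2}h mulKVg.
rewrite -E; split => [crg|cry]; last by rewrite eg; apply: commuteM.
have := commuteM (commuteV rs) crg; by rewrite eg mulKg.
Qed.

Lemma dih_cardX (gT : finGroupType) n (x y : gT) : dih n x y -> #|<[x]>| = n.
Proof. by case=> _ ox _ _ _; rewrite -orderE. Qed.

Lemma dih_cardCX (gT : finGroupType) n (x y : gT) : dih n x y -> #|~: <[x]>| = n.
Proof.
move=> D; have [cT _ _ _ _] := D; have := cardsC <[x]>; rewrite (dih_cardX D) cT.
by rewrite -addnn => /addnI.
Qed.

Lemma dih_odd_inX (gT : finGroupType) n (x y a : gT) : dih n x y -> odd n ->
  (a \in <[x]>) = (#[a] != 2%N).
Proof.
move=> D on; case: (boolP (a \in <[x]>)) => ax; last by rewrite (dih_ord2 D ax).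
apply/esym/negP => /eqP oa.
have : (#[a] %| n)%N by rewrite -(dih_cardX D) order_dvdG.
by rewrite oa dvdn2 on.
Qed.

Lemma dih_odd_noncomm (gT : finGroupType) n (x y a b : gT) : dih n x y -> odd n ->
  a \in <[x]> -> a != 1 -> b \notin <[x]> -> ~ commute a b.
Proof.
move=> D on ax a1 bx /(dih_comm D ax bx) aa.
have : #[a] != 2%N by rewrite -(dih_odd_inX a D on).
have : #[a] != 1%N by rewrite order_eq1.
have : (#[a] %| 2)%N by rewrite order_dvdn expgS expg1 aa.
have := order_gt0 a; move: #[a] => k; case: k => [|[|[|k]]] //.
Qed.

Lemma adj_odd (gT : finGroupType) n (x y g h : gT) : dih n x y -> odd n ->
  osc_adj g h = (g != h) && [|| g == 1, h == 1 | (g \in <[x]>) == (h \in <[x]>)].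
Proof.
move=> D on; rewrite /osc_adj; case: (g =P h) => //= /eqP ne.
have iX a : (a \in <[x]>) = (#[a] != 2%N) := dih_odd_inX a D on.
apply/idP/idP.
  case/orP => [/eqP ogh | /existsP [g' /existsP [h' /and4P [/eqP og /eqP oh /eqP c ne']]]].
    by rewrite !iX ogh eqxx !orbT.
  case: (g =P 1) => //= /eqP g1; case: (h =P 1) => //= /eqP h1.
  have g'1 : g' != 1 by rewrite -order_eq1 og order_eq1.
  have h'1 : h' != 1 by rewrite -order_eq1 oh order_eq1.
  have eg : (g' \in <[x]>) = (g \in <[x]>) by rewrite !iX og.
  have eh : (h' \in <[x]>) = (h \in <[x]>) by rewrite !iX oh.
  rewrite -eg -eh; case: (boolP (g' \in <[x]>)) => gx; case: (boolP (h' \in <[x]>)) => hx //.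
    by case: (dih_odd_noncomm D on gx g'1 hx).
  by case: (dih_odd_noncomm D on hx h'1 gx); apply: commute_sym.
case/or3P => [/eqP eg | /eqP eh | ex].
- apply/orP; right; apply/existsP; exists g; apply/existsP; exists h.
  by rewrite !eqxx eg mul1g mulg1 eqxx -eg ne.
- apply/orP; right; apply/existsP; exists g; apply/existsP; exists h.
  by rewrite !eqxx eh mul1g mulg1 eqxx -eh ne.
case: (boolP (g \in <[x]>)) ex => gx /=; case: (boolP (h \in <[x]>)) => //= hx _.
  apply/orP; right; apply/existsP; exists g; apply/existsP; exists h.
  by rewrite !eqxx ne (cyc_comm gx hx) eqxx.
by rewrite (dih_ord2 D gx) (dih_ord2 D hx).
Qed.

Lemma adj_even (gT : finGroupType) n (x y g h : gT) : dih n x y -> ~~ odd n -> (1 < n)%N ->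
  osc_adj g h = (g != h).
Proof.
move=> D en n0; have [_ ox _ _ _] := D.
rewrite /osc_adj; case: (g =P h) => //= /eqP ne.
pose z := x ^+ n./2.
have zx : z \in <[x]> by rewrite mem_cycle.
have zz : z * z = 1 by rewrite -expgD addnn even_halfK // -ox expg_order.
have z1 : z != 1.
  apply/eqP => /eqP; rewrite -order_dvdn ox => /dvdn_leq.
  have : (0 < n./2)%N by rewrite half_gt0.
  have := even_halfK en; rewrite -addnn; move: (n./2) => k; lia.
have oz : #[z] = 2%N.
  have : (#[z] %| 2)%N by rewrite order_dvdn expgS expg1 zz.
  have : #[z] != 1%N by rewrite order_eq1.
  have := order_gt0 z; move: #[z] => k; case: k => [|[|[|k]]] //.
have cz a : commute z a.
  case: (boolP (a \in <[x]>)) => ax; first exact: cyc_comm zx ax.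
  exact: (proj2 (dih_comm D zx ax) zz).
case: (#[g] =P #[h]) => //= ogh; apply/existsP.
case: (#[g] =P 2%N) => og.
  exists z; apply/existsP; exists h; rewrite oz og eqxx (cz h) !eqxx /=.
  by apply/eqP => ezh; apply: ogh; rewrite -ezh og oz.
case: (#[h] =P 2%N) => oh.
  exists g; apply/existsP; exists z; rewrite oz oh eqxx (commute_sym (cz g)) !eqxx /=.
  by apply/eqP => ezh; apply: ogh; rewrite ezh oh oz.
exists g; apply/existsP; exists h; rewrite !eqxx ne /=.
have gx : g \in <[x]> by case: (boolP (g \in <[x]>)) => // /(dih_ord2 D) /og.
have hx : h \in <[x]> by case: (boolP (h \in <[x]>)) => // /(dih_ord2 D) /oh.
by rewrite (cyc_comm gx hx) eqxx.
Qed.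

Lemma deg_even (gT : finGroupType) n (x y g : gT) : dih n x y -> ~~ odd n -> (1 < n)%N ->
  vdeg (@osc_adj gT) g = (n.*2).-1.
Proof.
move=> D en n1; have [cT _ _ _ _] := D; rewrite /vdeg.
have -> : [set h | osc_adj g h] = [set~ g].
  by apply/setP => h; rewrite !inE (adj_even _ _ D) // eq_sym.
by rewrite cardsC1 cT.
Qed.

Lemma deg_odd (gT : finGroupType) n (x y g : gT) : dih n x y -> odd n ->
  vdeg (@osc_adj gT) g = if g == 1 then (n.*2).-1 else if g \in <[x]> then n.-1 else n.
Proof.
move=> D on; have [cT _ _ _ _] := D; rewrite /vdeg.
case: eqVneq => [->|g1].
  have -> : [set h | osc_adj 1 h] = [set~ (1 : gT)].
    by apply/setP => h; rewrite !inE (adj_odd _ _ D) // eqxx /= andbT eq_sym.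
  by rewrite cardsC1 cT.
case: (boolP (g \in <[x]>)) => gx.
  have -> : [set h | osc_adj g h] = <[x]> :\ g.
    apply/setP => h; rewrite !inE (adj_odd _ _ D) // (negPf g1) gx /= eq_sym.
    by case: (h =P 1) => [->|] //=; rewrite ?group1.
  by have := cardsD1 g <[x]>; rewrite gx (dih_cardX D) => ->.
have -> : [set h | osc_adj g h] = (1 : gT) |: (~: <[x]> :\ g).
  apply/setP => h; rewrite !inE (adj_odd _ _ D) // (negPf g1) (negPf gx) /= eq_sym.
  case: (h =P 1) => [->|] //=; first by rewrite eq_sym g1.
rewrite cardsU1 !inE group1 /=.
by have := cardsD1 g (~: <[x]>); rewrite (dih_cardCX D) inE gx andbF => ->.
Qed.
Lemma dih_exists n : (1 < n)%N -> exists x y : 'D_(n.*2), dih n x y.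
Proof.
move=> n1; have := isoGrp_hom (Grp_dihedral n1).
case/existsP => -[x y] /= /eqP [defG xq y2 xy].
have nyx : <[y]> \subset 'N(<[x]>) by rewrite norms_cycle xy groupV cycle_id.
have defG' : <[x]> * <[y]> = [set: 'D_n.*2] by rewrite -norm_joinEr.
have cardT : #|[set: 'D_n.*2]| = n.*2 by exact: card_dihedral n1.
have oy : (#[y] <= 2)%N by rewrite dvdn_leq // order_dvdn y2.
have ox1 : (#[x] %| n)%N by rewrite order_dvdn xq.
have ox : #[x] = n.
  apply/eqP; rewrite eqn_leq dvdn_leq ?(ltnW n1) //=.
  have := mul_cardG <[x]> <[y]>; rewrite defG' cardT.
  have : (0 < #|<[x]> :&: <[y]>|)%N by apply/card_gt0P; exists 1; rewrite group1.
  rewrite -!orderE => h1 h2.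
  have h3 : (n.*2 <= #[x] * #[y])%N by rewrite h2 leq_pmulr.
  have h4 : (#[x] * #[y] <= #[x] * 2)%N by rewrite leq_mul2l oy orbT.
  have := leq_trans h3 h4; move: (#[x]) => a; by rewrite -muln2 leq_mul2r.
exists x, y; split => //; first by rewrite -cardsT.
move=> g gx; have : g \in <[x]> * <[y]> by rewrite defG' inE.
case/mulsgP => r s rx /cycleP [i ->] eg.
rewrite eg -(expg_mod _ y2) in gx *.
have : (i %% 2 < 2)%N by rewrite ltn_pmod.
case: (i %% 2)%N gx => [|[|//]] gx _.
  by rewrite ?expg0 mulg1 rx in gx.
by exists r; rewrite ?expg1.
Qed.

End GroupPart.

Lemma sylvester_det (R : comNzRingType) m k (A : 'M[R]_(m,k)) (B : 'M[R]_(k,m)) :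
  \det (1%:M - A *m B) = \det (1%:M - B *m A).
Proof.
have e1 : block_mx 1%:M A B 1%:M =
  block_mx 1%:M 0 B 1%:M *m block_mx 1%:M A 0 (1%:M - B *m A).
  by rewrite mulmx_block ?mul1mx ?mul0mx ?mulmx1 ?mulmx0 ?addr0 ?add0r addrC subrK.
have e2 : block_mx 1%:M A B 1%:M =
  block_mx (1%:M - A *m B) A 0 1%:M *m block_mx 1%:M 0 B 1%:M.
  by rewrite mulmx_block ?mul1mx ?mul0mx ?mulmx1 ?mulmx0 ?addr0 ?add0r subrK.
have := congr1 determinant e1; rewrite e2 !det_mulmx !det_lblock !det_ublock !det1.
by rewrite !mul1r !mulr1.
Qed.

Lemma char_poly_eval (R : comNzRingType) N (A : 'M[R]_N) (x : R) :
  (char_poly A).[x] = \det (x%:M - A).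
Proof.
rewrite /char_poly -horner_evalE -det_map_mx; congr determinant.
apply/matrixP => i j; by rewrite !mxE /= horner_evalE hornerD hornerN hornerC hornerMn hornerX.
Qed.

Lemma poly_eq_pos (R : realDomainType) (p q : {poly R}) :
  (forall x : R, 0 < x -> p.[x] = q.[x]) -> p = q.
Proof.
move=> H; apply/eqP; rewrite -subr_eq0; apply/negPn/negP => nz.
pose rs := [seq (i.+1)%:R : R | i <- iota 0 (size (p - q))].
have := max_poly_roots (rs := rs) nz.
rewrite size_map size_iota ltnn => h; suff: false by []; apply: h.
  apply/allP => x /mapP [i _ ->]; rewrite /root hornerD hornerN H ?subrr //.
rewrite map_inj_uniq ?iota_uniq // => i j /eqP; by rewrite eqr_nat => /eqP [].
Qed.

Lemma det_class (R : fieldType) N k (cl : 'I_N -> 'I_k) (K : 'M[R]_k) (x : R) :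
  (forall i, x + K (cl i) (cl i) != 0) ->
  \det (x%:M - \matrix_(i,j) (if i == j then 0 else K (cl i) (cl j))) =
  (\prod_i (x + K (cl i) (cl i))) *
  \det (1%:M - K *m diag_mx (\row_c (#|[set i | cl i == c]|%:R / (x + K c c)))).
Proof.
move=> nz.
pose U : 'M[R]_(N,k) := \matrix_(i,c) (cl i == c)%:R.
pose d := \row_i (x + K (cl i) (cl i)).
pose dinv := \row_i (x + K (cl i) (cl i))^-1.
have UK i c : (U *m K) i c = K (cl i) c.
  rewrite mxE (bigD1 (cl i)) //= big1 ?mxE ?eqxx ?mul1r ?addr0 // => c' ne.
  by rewrite mxE eq_sym (negPf ne) mul0r.
have UKU i j : (U *m K *m U^T) i j = K (cl i) (cl j).
  rewrite mxE (bigD1 (cl j)) //= big1 ?UK ?mxE ?eqxx ?mulr1 ?addr0 // => c' ne.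
  by rewrite !mxE eq_sym (negPf ne) mulr0.
have E : x%:M - \matrix_(i,j) (if i == j then 0 else K (cl i) (cl j)) =
    diag_mx d *m (1%:M - (diag_mx dinv *m U) *m (K *m U^T)).
  rewrite mulmxBr mulmx1 !mulmxA mulmx_diag.
  have -> : diag_mx (\row_j (d 0 j * dinv 0 j)) = 1%:M.
    by apply/matrixP => i j; rewrite !mxE divff.
  rewrite mul1mx; apply/matrixP => i j; rewrite [RHS]mxE.
  have -> : (- (U *m K *m U^T)) i j = - K (cl i) (cl j) by rewrite mxE UKU.
  rewrite !mxE.
  by case: eqVneq => [->|] /=; rewrite ?mulr1n ?mulr0n ?subr0 ?sub0r // addrK.
rewrite E det_mulmx det_diag sylvester_det.
congr (_ * _); first by apply: eq_bigr => i _; rewrite mxE.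
congr (\det (_ - _)); rewrite -!mulmxA; congr (_ *m _).
rewrite mul_diag_mx; apply/matrixP => c c'; rewrite !mxE.
rewrite (eq_bigr (fun i => if cl i == c then (x + K c c)^-1 *+ (c == c') else 0)); last first.
  move=> i _; rewrite !mxE; case: eqP => [<-|_]; last by rewrite mul0r.
  by rewrite mul1r mulr_natr.
rewrite -big_mkcond /= sumr_const cardsE -mulrnA mulnC mulrnA; congr (_ *+ _).
by rewrite mulrC mulr_natr.
Qed.

Definition kfun {R : nzRingType} (k00 k11 k22 k01 k02 : R) (i j : nat) : R :=
  match i, j with
  | 0, 0 => k00 | 1, 1 => k11 | 2, 2 => k22
  | 0, 1 | 1, 0 => k01 | 0, 2 | 2, 0 => k02 | _, _ => 0 end.
Definition dfun {R : nzRingType} (d0 d1 d2 : R) (j : nat) : R :=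
  match j with 0 => d0 | 1 => d1 | _ => d2 end.

Lemma det3_sym (R : comNzRingType) (k00 k11 k22 k01 k02 d0 d1 d2 : R) :
  \det (\matrix_(i < 3, j < 3) ((i == j)%:R - kfun k00 k11 k22 k01 k02 i j * dfun d0 d1 d2 j))
  = (1 - k00 * d0) * (1 - k11 * d1) * (1 - k22 * d2)
    - k01 ^+ 2 * d0 * d1 * (1 - k22 * d2) - k02 ^+ 2 * d0 * d2 * (1 - k11 * d1).
Proof.
rewrite (expand_det_row _ ord0) !big_ord_recl big_ord0 /cofactor.
rewrite !(expand_det_row _ ord0) !big_ord_recl !big_ord0 /cofactor !det_mx11 !mxE /=.
rewrite /bump /= !expr0 !expr1 expr2 !addn0.
ring.
Qed.

Lemma sqrt_dbl (R : rcfType) (a : R) : 0 <= a ->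
  Num.sqrt (a ^+ 2 + a ^+ 2) = a * Num.sqrt 2.
Proof.
move=> a0; rewrite -mulr2n -[_ *+ 2]mulr_natl sqrtrM ?ler0n // sqrtr_sqr ger0_norm //.
by rewrite mulrC.
Qed.

Lemma prod_class (R : comNzRingType) N k (cl : 'I_N -> 'I_k) (F : 'I_k -> R) :
  \prod_i F (cl i) = \prod_c F c ^+ #|[set i | cl i == c]|.
Proof.
rewrite (partition_big cl predT) //; apply: eq_bigr => c _.
rewrite (eq_bigr (fun _ => F c)) => [|i /andP [_ /eqP ->] //].
by rewrite prodr_const cardsE.
Qed.

Lemma even_case (R : realType) (n : nat) : (1 < n)%N -> ~~ odd n ->
  let S := sombor_matrix R (@osc_adj 'D_(n.*2)) in
  let s2 : R := Num.sqrt 2 in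
     char_poly S =
       ('X + ((2 * n - 1)%N%:R * s2)%:P) ^+ (2 * n - 1)%N
     * ('X - (((2 * n - 1) ^ 2)%N%:R * s2)%:P).
Proof.
move=> n1 en S s2.
have [x [y D]] := dih_exists n1.
have [cT _ _ _ _] := D.
pose c : R := (2 * n - 1)%N%:R * s2.
pose K : 'M[R]_1 := \matrix_(i, j) c.
pose cl := fun i : 'I_#|'D_(n.*2)| => (ord0 : 'I_1).
have ES : S = \matrix_(i, j) (if i == j then 0 else K (cl i) (cl j)).
  apply/matrixP => i j; rewrite !mxE (adj_even _ _ D) // (inj_eq enum_val_inj).
  case: eqVneq => //= _; rewrite !(deg_even _ D) //.
  rewrite sqrt_dbl ?ler0n //; congr (_%:R * _); lia.
apply: poly_eq_pos => t t0.
rewrite char_poly_eval ES det_class; last first.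
  move=> i; rewrite mxE; apply: lt0r_neq0; apply: ltr_pwDl => //.
  by rewrite mulr_ge0 ?ler0n ?sqrtr_ge0.
rewrite det_mx11 (eq_bigr (fun _ => t + c)); last by move=> i _; rewrite mxE.
rewrite prodr_const card_ord mul_mx_diag !mxE /=.
have -> : [set i | cl i == ord0] = setT by apply/setP => i; rewrite !inE.
rewrite cardsT card_ord cT !hornerE.
have tc : t + c != 0.
  by apply: lt0r_neq0; apply: ltr_pwDl => //; rewrite mulr_ge0 ?ler0n ?sqrtr_ge0.
rewrite /c in tc *; move: tc; set m := (2 * n - 1)%N.
have -> : n.*2 = m.+1 by rewrite /m; lia.
rewrite exprS natrX -natr1 => tc.
rewrite [X in 1 - X](_ : _ = (m%:R * s2) * (m%:R + 1) / (t + m%:R * s2)) //.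
by field.
Qed.

Lemma odd_case (R : realType) (n : nat) : (3 <= n)%N -> odd n ->
  let S := sombor_matrix R (@osc_adj 'D_(n.*2)) in
  let s2 : R := Num.sqrt 2 in
     char_poly S =
       ('X + ((n - 1)%N%:R * s2)%:P) ^+ (n - 2)%N
     * ('X + (n%:R * s2)%:P) ^+ (n - 1)%N
     * ('X * ('X - (((n - 1) * (n - 2))%N%:R * s2)%:P)
           * ('X - ((n * (n - 1))%N%:R * s2)%:P)
        - ((n - 1) * (5 * n ^ 2 - 6 * n + 2))%N%:R%:P
            * ('X - ((n * (n - 1))%N%:R * s2)%:P)
        - (n * (5 * n ^ 2 - 4 * n + 1))%N%:R%:P
            * ('X - (((n - 1) * (n - 2))%N%:R * s2)%:P)).
Proof.
move=> n3 on S s2.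
have n1 : (1 < n)%N by lia.
have [x [y D]] := dih_exists n1.
have [cT _ _ _ _] := D.
pose T := 'D_(n.*2).
pose cln (g : T) : nat := if g == 1%g then 0%N else if g \in <[x]>%g then 1%N else 2%N.
pose cl (i : 'I_#|T|) : 'I_3 := inord (cln (enum_val i)).
have clE i : (cl i : nat) = cln (enum_val i).
  by rewrite /cl inordK // /cln; case: ifP => //; case: ifP.
pose k11 : R := (n.-1)%:R * s2.
pose k22 : R := n%:R * s2.
pose k01 : R := Num.sqrt (((n.*2).-1)%:R ^+ 2 + (n.-1)%:R ^+ 2).
pose k02 : R := Num.sqrt (((n.*2).-1)%:R ^+ 2 + n%:R ^+ 2).
pose K : 'M[R]_3 := \matrix_(a, b) kfun 0 k11 k22 k01 k02 a b.
have ES : S = \matrix_(i, j) (if i == j then 0 else K (cl i) (cl j)).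
  apply/matrixP => i j; rewrite !mxE !clE (adj_odd _ _ D) // (inj_eq enum_val_inj).
  case: eqVneq => //= ne; rewrite !(deg_odd _ D) //.
  have : enum_val i != enum_val j by rewrite (inj_eq enum_val_inj).
  rewrite /cln; move: (enum_val i) (enum_val j) => g h {ne} ne.
  case: (g =P 1%g) => [eg|g1]; case: (h =P 1%g) => [eh|h1] /=.
  - by rewrite eg eh eqxx in ne.
  - by case: (h \in _).
  - by rewrite addrC; case: (g \in _).
  - by case: (g \in _); case: (h \in _); rewrite //= sqrt_dbl ?ler0n.
have cnt (c : 'I_3) : #|[set i | cl i == c]| = nth 0%N [:: 1%N; n.-1; n] c.
  rewrite -(card_imset _ enum_val_inj).
  have -> : enum_val @: [set i | cl i == c] = [set g | cln g == c].
    apply/setP => g; rewrite inE; apply/imsetP/idP => [[i] | e].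
      by rewrite inE -val_eqE /= clE => e ->.
    exists (enum_rank g); last by rewrite enum_rankK.
    by rewrite inE -val_eqE /= clE enum_rankK.
  case: c => [[|[|[|//]]] /= _].
  - have -> : [set g | cln g == 0%N] = [set 1%g].
      by apply/setP => g; rewrite !inE /cln; case: (g =P 1%g) => //; case: ifP.
    by rewrite cards1.
  - have -> : [set g | cln g == 1%N] = <[x]>%g :\ 1%g.
      by apply/setP => g; rewrite !inE /cln; case: (g =P 1%g) => //= _; case: ifP.
    by have := cardsD1 1%g <[x]>%g; rewrite group1 (dih_cardX D) add1n => e; rewrite [in RHS]e.
  - have -> : [set g | cln g == 2%N] = ~: <[x]>%g.
      apply/setP => g; rewrite !inE /cln; case: (g =P 1%g) => [->|]; rewrite ?group1 //.
      by case: ifP.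
    exact: dih_cardCX D.
have kpos (c : 'I_3) : 0 <= K c c.
  rewrite mxE; case: c => [[|[|[|//]]] ?] /=; by rewrite ?mulr_ge0 ?ler0n ?sqrtr_ge0.
apply: poly_eq_pos => t t0.
rewrite char_poly_eval ES det_class; last first.
  by move=> i; apply: lt0r_neq0; apply: ltr_pwDl.
have c0 : #|[set i | cl i == ord0]| = 1%N by exact: cnt.
have c1 : #|[set i | cl i == lift ord0 ord0]| = n.-1 by exact: cnt.
have c2 : #|[set i | cl i == lift ord0 (lift ord0 ord0)]| = n by exact: cnt.
have K0 : K ord0 ord0 = 0 by rewrite mxE.
have K1 : K (lift ord0 ord0) (lift ord0 ord0) = k11 by rewrite mxE.
have K2 : K (lift ord0 (lift ord0 ord0)) (lift ord0 (lift ord0 ord0)) = k22 by rewrite mxE.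
rewrite (prod_class cl (fun c => t + K c c)) !big_ord_recl big_ord0 c0 c1 c2 K0 K1 K2.
rewrite (_ : 1%:M - K *m diag_mx _ = \matrix_(i < 3, j < 3) ((i == j)%:R -
     kfun 0 k11 k22 k01 k02 i j * dfun (1 / (t + 0)) ((n.-1)%:R / (t + k11)) (n%:R / (t + k22)) j)); last first.
  apply/matrixP => i j; rewrite mul_mx_diag !mxE cnt; case: j => [[|[|[|//]]] ?] //=.
rewrite det3_sym !(hornerM, hornerD, hornerN, hornerC, hornerX, horner_exp).
have h0 : t != 0 by rewrite lt0r_neq0.
have h1 : t + k11 != 0.
  by apply: lt0r_neq0; apply: ltr_pwDl => //; rewrite mulr_ge0 ?ler0n ?sqrtr_ge0.
have h2 : t + k22 != 0.
  by apply: lt0r_neq0; apply: ltr_pwDl => //; rewrite mulr_ge0 ?ler0n ?sqrtr_ge0.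
have p1 : (t + k11) ^+ n.-1 = (t + k11) ^+ (n - 2) * (t + k11).
  by rewrite -exprSr; congr (_ ^+ _); lia.
have p2 : (t + k22) ^+ n = (t + k22) ^+ (n - 1) * (t + k22).
  by rewrite -exprSr; congr (_ ^+ _); lia.
rewrite p1 p2 /k01 /k02 !sqr_sqrtr ?addr_ge0 ?sqr_ge0 //.
move: h1 h2; rewrite /k11 /k22.
set N : R := n%:R.
have e1 : (n.-1)%:R = N - 1 :> R by rewrite -subn1 natrB //; lia.
have e2 : (n - 1)%N%:R = N - 1 :> R by rewrite natrB //; lia.
have e3 : ((n.*2).-1)%:R = 2 * N - 1 :> R.
  by rewrite -subn1 natrB -?mul2n ?natrM //; lia.
have e4 : ((n - 1) * (n - 2))%N%:R = (N - 1) * (N - 2) :> R.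
  by rewrite natrM !natrB //; lia.
have e5 : (n * (n - 1))%N%:R = N * (N - 1) :> R.
  by rewrite natrM !natrB //; lia.
have e6 : ((n - 1) * (5 * n ^ 2 - 6 * n + 2))%N%:R = (N - 1) * (5 * N ^+ 2 - 6 * N + 2) :> R.
  rewrite natrM natrD natrB ?natrB ?natrM ?natrX //. all: try lia.
have e7 : (n * (5 * n ^ 2 - 4 * n + 1))%N%:R = N * (5 * N ^+ 2 - 4 * N + 1) :> R.
  rewrite natrM natrD natrB ?natrM ?natrX //. all: try lia.
rewrite e1 e2 e3 e4 e5 e6 e7.
set A := (_ ^+ (n - 2)); set B := (_ ^+ (n - 1)) => h1 h2.
by rewrite !addr0; field; rewrite h0 h1 h2.
Qed.


Unset Implicit Arguments.

Theorem corollary4p4 (R : realType) (n : nat) : (3 <= n)%N ->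
  let S := sombor_matrix R (@osc_adj 'D_(n.*2)) in
  let s2 : R := Num.sqrt 2 in
  (odd n ->
     char_poly S =
       ('X + ((n - 1)%N%:R * s2)%:P) ^+ (n - 2)%N
     * ('X + (n%:R * s2)%:P) ^+ (n - 1)%N
     * ('X * ('X - (((n - 1) * (n - 2))%N%:R * s2)%:P)
           * ('X - ((n * (n - 1))%N%:R * s2)%:P)
        - ((n - 1) * (5 * n ^ 2 - 6 * n + 2))%N%:R%:P
            * ('X - ((n * (n - 1))%N%:R * s2)%:P)
        - (n * (5 * n ^ 2 - 4 * n + 1))%N%:R%:P
            * ('X - (((n - 1) * (n - 2))%N%:R * s2)%:P)))
  /\
  (~~ odd n ->
     char_poly S =
       ('X + ((2 * n - 1)%N%:R * s2)%:P) ^+ (2 * n - 1)%N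
     * ('X - (((2 * n - 1) ^ 2)%N%:R * s2)%:P)).
Proof.
move=> n3 S s2; split => hn.
  exact: odd_case.
apply: even_case => //; lia.
Qed.
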